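(* Let $A$ and $B$ be $d\times d$ matrices over $\mathbb{C}$, where $A$ has rank one, and let $\mathsf{A}=\{A,B\}$. Then either $\varrho(\mathsf{A})=\rho(B)$, or there exists an integer $n \geq 0$ such that $\varrho(\mathsf{A})=\rho(AB^n)^{1/(n+1)}$.
   Context: For a square matrix $A$, $\rho(A)$ denotes its ordinary spectral radius. For a nonempty bounded set $\mathsf{A}$ of $d\times d$ complex matrices, the joint spectral radius is \[\varrho(\mathsf{A})=\lim_{n \to \infty} \sup\left\{\left\|A_{i_n} \cdots A_{i_1}\right\|^{1/n} \colon A_{i_j} \in \mathsf{A}\right\},\] where $\|\cdot\|$ is any matrix norm (the limit exists and is independent of the norm). Here $B^0$ is the identity matrix. *)

(* Defs.v *)
From HB Require Import structures.
From mathcomp Require Import all_boot all_order all_algebra.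
From mathcomp Require Import all_classical all_reals all_analysis.
From mathcomp Require Import complex.
Import numFieldNormedType.Exports.
Set Implicit Arguments. Unset Strict Implicit. Unset Printing Implicit Defensive.
Import Order.TTheory GRing.Theory Num.Theory.
Local Open Scope ring_scope.
Local Open Scope classical_set_scope.

Definition cabs (R : realType) (z : R[i]) : R := ComplexField.Normc.normc z.

Definition specrad (R : realType) (d : nat) (M : 'M[R[i]]_d) : R :=
  sup [set cabs l | l in [set l : R[i] | eigenvalue M l]].

Definition mxnorm (R : realType) (d : nat) (M : 'M[R[i]]_d) : R :=
  \big[Num.max/0]_(ij : 'I_d * 'I_d) cabs (M ij.1 ij.2).

(* product A_{w(n-1)} ... A_{w 0} of a word over a two-letter alphabet:
   letter true = A, letter false = B *)
Definition wordprod (R : realType) (d : nat) (A B : 'M[R[i]]_d) (n : nat)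
  (w : {ffun 'I_n -> bool}) : 'M[R[i]]_d :=
  \prod_(j < n) (if w (rev_ord j) then A else B).

Definition jsr_seq (R : realType) (d : nat) (A B : 'M[R[i]]_d) (n : nat) : R :=
  \big[Num.max/0]_(w : {ffun 'I_n -> bool})
     (mxnorm (wordprod A B w) `^ (n%:R^-1)).

Definition jsr2 (R : realType) (d : nat) (A B : 'M[R[i]]_d) : R :=
  limn (jsr_seq A B).

(* Main.v *)
Require Import Defs.
From HB Require Import structures.
From mathcomp Require Import all_boot all_order all_algebra.
From mathcomp Require Import all_classical all_reals all_analysis.
From mathcomp Require Import complex.
From mathcomp Require Import ring lra zify.
Import Order.TTheory GRing.Theory Num.Theory.
Set Implicit Arguments. Unset Strict Implicit. Unset Printing Implicit Defensive.
Local Open Scope ring_scope.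

Module Part1.


Section Norms.
Variable R : realType.
Local Notation C := (R[i]).

Lemma cabs_ge0 (z : C) : 0 <= cabs z.
Proof. by case: z => a b; rewrite /cabs /=; exact: sqrtr_ge0. Qed.

Lemma cabsM (x y : C) : cabs (x * y) = cabs x * cabs y.
Proof. exact: ComplexField.Normc.normcM. Qed.

Lemma cabsD (x y : C) : cabs (x + y) <= cabs x + cabs y.
Proof. exact: (@le_normcD R x y). Qed.

Lemma cabs0 : cabs (0 : C) = 0.
Proof. exact: ComplexField.Normc.normc0. Qed.

Lemma cabs1 : cabs (1 : C) = 1.
Proof. exact: ComplexField.Normc.normc1. Qed.

Lemma cabs_eq0 (x : C) : cabs x = 0 -> x = 0.
Proof. exact: ComplexField.Normc.eq0_normc. Qed.

Lemma cabsX (x : C) k : cabs (x ^+ k) = cabs x ^+ k.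
Proof. elim: k => [|k IH]; first by rewrite !expr0 cabs1.
by rewrite !exprS cabsM IH. Qed.

Lemma cabs_sum I (r : seq I) (P : pred I) (F : I -> C) :
  cabs (\sum_(i <- r | P i) F i) <= \sum_(i <- r | P i) cabs (F i).
Proof.
elim/big_ind2: _ => //; first by rewrite cabs0.
move=> x1 y1 x2 y2 h1 h2; apply: le_trans (cabsD _ _) _; exact: lerD.
Qed.

Definition mn m n (M : 'M[C]_(m, n)) : R :=
  \big[Num.max/0]_(ij : 'I_m * 'I_n) cabs (M ij.1 ij.2).

Lemma mxnorm_mn d (M : 'M[C]_d) : mxnorm M = mn M.
Proof. by []. Qed.

Lemma mn_ge0 m n (M : 'M[C]_(m, n)) : 0 <= mn M.
Proof.
rewrite /mn; elim/big_ind: _ => //.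
- by move=> x y hx hy; rewrite le_max hx.
- by move=> ij _; exact: cabs_ge0.
Qed.

Lemma mn_entry m n (M : 'M[C]_(m, n)) i j : cabs (M i j) <= mn M.
Proof. exact: (le_bigmax 0 (fun ij : 'I_m * 'I_n => cabs (M ij.1 ij.2)) (i, j)). Qed.

Lemma mn_le m n (M : 'M[C]_(m, n)) c :
  0 <= c -> (forall i j, cabs (M i j) <= c) -> mn M <= c.
Proof. by move=> c0 h; apply: bigmax_le => // [[i j]] _; exact: h. Qed.

Lemma mn_mul m n p (X : 'M[C]_(m, n)) (Y : 'M[C]_(n, p)) :
  mn (X *m Y) <= n%:R * (mn X * mn Y).
Proof.
apply: mn_le; first by rewrite mulr_ge0 ?ler0n ?mulr_ge0 ?mn_ge0.
move=> i j; rewrite mxE; apply: le_trans (cabs_sum _ _ _) _.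
apply: le_trans (_ : \sum_(l < n) (mn X * mn Y) <= _); last first.
  by rewrite sumr_const card_ord mulr_natl.
apply: ler_sum => l _; rewrite cabsM.
by apply: ler_pM; rewrite ?cabs_ge0 ?mn_entry.
Qed.

Lemma mn_scale m n (a : C) (X : 'M[C]_(m, n)) : mn (a *: X) <= cabs a * mn X.
Proof.
apply: mn_le; first by rewrite mulr_ge0 ?cabs_ge0 ?mn_ge0.
move=> i j; rewrite mxE cabsM; apply: ler_wpM2l; rewrite ?cabs_ge0 ?mn_entry //.
Qed.

Lemma mn_pos m n (X : 'M[C]_(m, n)) : X != 0 -> 0 < mn X.
Proof.
move=> /eqP X0; have [[i j] hij] : exists ij : 'I_m * 'I_n, X ij.1 ij.2 != 0.
  apply/existsP; apply: contraT; rewrite negb_exists => /forallP h.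
  by exfalso; apply: X0; apply/matrixP => i j; rewrite mxE; move: (h (i, j)); rewrite negbK => /eqP.
apply: lt_le_trans (mn_entry X i j); rewrite lt_neqAle cabs_ge0 andbT.
by apply/eqP => /esym /cabs_eq0 /eqP; rewrite (negbTE hij).
Qed.

Definition ninf n (M : 'M[C]_n) : R := \big[Num.max/0]_i \sum_j cabs (M i j).

Lemma ninf_ge0 n (M : 'M[C]_n) : 0 <= ninf M.
Proof. rewrite /ninf; elim/big_ind: _ => //.
- by move=> x y hx hy; rewrite le_max hx.
- by move=> i _; apply: sumr_ge0 => j _; exact: cabs_ge0. Qed.

Lemma ninf_row n (M : 'M[C]_n) i : \sum_j cabs (M i j) <= ninf M.
Proof. exact: (le_bigmax 0 (fun i => \sum_j cabs (M i j)) i). Qed.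

Lemma ninf_le n (M : 'M[C]_n) c :
  0 <= c -> (forall i, \sum_j cabs (M i j) <= c) -> ninf M <= c.
Proof. by move=> c0 h; apply: bigmax_le => // i _; exact: h. Qed.

Lemma mn_ninf n (M : 'M[C]_n) : mn M <= ninf M.
Proof.
apply: mn_le; first exact: ninf_ge0.
move=> i j; apply: le_trans (ninf_row M i).
rewrite (bigD1 j) //= lerDl; apply: sumr_ge0 => l _; exact: cabs_ge0.
Qed.

Lemma ninf_mul n (X Y : 'M[C]_n) : ninf (X *m Y) <= ninf X * ninf Y.
Proof.
apply: ninf_le; first by rewrite mulr_ge0 ?ninf_ge0.
move=> i.
apply: le_trans (_ : \sum_j \sum_l cabs (X i l) * cabs (Y l j) <= _).
  apply: ler_sum => j _; rewrite mxE; apply: le_trans (cabs_sum _ _ _) _.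
  by apply: ler_sum => l _; rewrite cabsM.
rewrite exchange_big /=.
apply: le_trans (_ : \sum_l cabs (X i l) * ninf Y <= _).
  apply: ler_sum => l _; rewrite -mulr_sumr; apply: ler_wpM2l; first exact: cabs_ge0.
  exact: ninf_row.
by rewrite -mulr_suml; apply: ler_wpM2r; [exact: ninf_ge0 | exact: ninf_row].
Qed.

Lemma ninf1 n : ninf (1%:M : 'M[C]_n) <= 1.
Proof.
apply: ninf_le => // i; rewrite (bigD1 i) //= big1 ?addr0.
  by rewrite mxE eqxx cabs1.
by move=> j /negbTE ji; rewrite mxE eq_sym ji cabs0.
Qed.

Lemma ninfX n (M : 'M[C]_n) k : ninf (M ^+ k) <= ninf M ^+ k.
Proof.
elim: k => [|k IH]; first by rewrite !expr0; exact: ninf1.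
rewrite !exprS -mulmxE; apply: le_trans (ninf_mul _ _) _.
by apply: ler_wpM2l; [exact: ninf_ge0 | exact: IH].
Qed.

End Norms.

End Part1.
Import Part1.

Module Part2.


Section Words.
Variable R : realType.
Local Notation C := (R[i]).
Variables (d : nat) (A B : 'M[C]_d).

Inductive prods : nat -> 'M[C]_d -> Prop :=
| prods0 : prods 0 1
| prodsA n P : prods n P -> prods n.+1 (A *m P)
| prodsB n P : prods n P -> prods n.+1 (B *m P).

Lemma wordprod_rec n (w : {ffun 'I_n.+1 -> bool}) :
  wordprod A B w = (if w ord_max then A else B) *m
     wordprod A B [ffun j : 'I_n => w (widen_ord (leqnSn n) j)].
Proof.
rewrite /wordprod big_ord_recl mulmxE; congr (_ * _).
  by congr (if w _ then _ else _); apply: val_inj; rewrite /= subn1.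
apply: eq_bigr => j _; rewrite ffunE; congr (if w _ then _ else _).
by apply: val_inj; rewrite /= /bump /= add1n subSS.
Qed.

Lemma wordprod_prods n (w : {ffun 'I_n -> bool}) : prods n (wordprod A B w).
Proof.
elim: n w => [|n IH] w.
  by rewrite /wordprod big_ord0; exact: prods0.
rewrite wordprod_rec; case: (w ord_max); [apply: prodsA | apply: prodsB]; exact: IH.
Qed.

Lemma prods_wordprod n P : prods n P -> exists w : {ffun 'I_n -> bool}, wordprod A B w = P.
Proof.
have ext : forall n (w : {ffun 'I_n -> bool}) (b : bool),
   exists w' : {ffun 'I_n.+1 -> bool}, w' ord_max = b /\
     [ffun j : 'I_n => w' (widen_ord (leqnSn n) j)] = w.
  move=> m w b; exists [ffun i : 'I_m.+1 => oapp w b (insub (val i))]; split.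
    by rewrite ffunE insubF //= ltnn.
  apply/ffunP => j; rewrite !ffunE /=.
  by rewrite (insubT (fun k => (k < m)%N) (ltn_ord j)) /=; congr (w _); apply: val_inj.
elim => [|m Q _ [w <-]|m Q _ [w <-]].
- by exists [ffun i : 'I_0 => true]; rewrite /wordprod big_ord0.
- have [w' [h1 h2]] := ext m w true; exists w'; by rewrite wordprod_rec h1 h2.
- have [w' [h1 h2]] := ext m w false; exists w'; by rewrite wordprod_rec h1 h2.
Qed.

Lemma jsr_ge n P : prods n P -> mn P `^ (n%:R^-1) <= jsr_seq A B n.
Proof.
move=> /prods_wordprod [w <-]; rewrite /jsr_seq.
exact: (le_bigmax 0 (fun w : {ffun 'I_n -> bool} => mxnorm (wordprod A B w) `^ (n%:R^-1)) w).
Qed.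

Lemma jsr_seq_ge0 n : 0 <= jsr_seq A B n.
Proof.
rewrite /jsr_seq; elim/big_ind: _ => //.
- by move=> x y hx hy; rewrite le_max hx.
- by move=> w _; exact: powR_ge0.
Qed.

Lemma jsr_le n c : 0 <= c -> (forall P, prods n P -> mn P <= c) ->
  jsr_seq A B n <= c `^ (n%:R^-1).
Proof.
move=> c0 h; apply: bigmax_le; first exact: powR_ge0.
move=> w _; apply: ge0_ler_powR; rewrite ?invr_ge0 ?ler0n //.
- by rewrite nnegrE mxnorm_mn mn_ge0.
- by rewrite mxnorm_mn; apply: h; exact: wordprod_prods.
Qed.

End Words.

Section PowR.
Variable R : realType.

Lemma powR_invnK (x : R) n : 0 <= x -> (0 < n)%N -> (x `^ (n%:R^-1)) ^+ n = x.
Proof.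
move=> x0 n0; rewrite -powR_mulrn ?powR_ge0 // -powRrM mulVf ?powRr1 //.
by rewrite pnatr_eq0 -lt0n.
Qed.

Lemma powR_invn_le (x y : R) n : 0 <= x -> 0 <= y -> (0 < n)%N ->
  (x `^ (n%:R^-1) <= y) = (x <= y ^+ n).
Proof.
move=> x0 y0 n0; rewrite -{2}(powR_invnK x0 n0).
by rewrite ler_pXn2r // -?lt0n // nnegrE powR_ge0.
Qed.

End PowR.

End Part2.
Import Part2.

Module Part3.


Section Eigen.
Variable R : realType.
Local Notation C := (R[i]).

Lemma cabsV (x : C) : cabs x^-1 = (cabs x)^-1.
Proof. exact: ComplexField.Normc.normcV. Qed.

Lemma mn_scaleE m n (a : C) (X : 'M[C]_(m, n)) : mn (a *: X) = cabs a * mn X.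
Proof.
apply/eqP; rewrite eq_le mn_scale /=.
have [->|a0] := eqVneq a 0; first by rewrite cabs0 mul0r mn_ge0.
have : mn X <= cabs a^-1 * mn (a *: X).
  by apply: le_trans (mn_scale _ _); rewrite scalerA mulVf // scale1r.
rewrite cabsV => h; have ca : 0 < cabs a.
  by rewrite lt_neqAle cabs_ge0 andbT; apply/eqP => /esym /cabs_eq0 /eqP; rewrite (negbTE a0).
by rewrite -ler_pdivlMl // mulrC.
Qed.

Lemma eig_pow n (M : 'M[C]_n) (v : 'rV[C]_n) mu k :
  v *m M = mu *: v -> v *m M ^+ k = mu ^+ k *: v.
Proof.
move=> h; elim: k => [|k IH]; first by rewrite !expr0 mulmx1 scale1r.
by rewrite exprSr -mulmxE mulmxA IH -scalemxAl h scalerA exprSr.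
Qed.

Lemma eig_bound n (M : 'M[C]_n) mu k : eigenvalue M mu ->
  cabs mu ^+ k <= n%:R * mn (M ^+ k).
Proof.
move=> /eigenvalueP [v hv v0].
have := mn_mul v (M ^+ k); rewrite (eig_pow k hv) mn_scaleE cabsX.
have vp := mn_pos v0.
by rewrite mulrCA mulrC ler_pM2l.
Qed.

Definition eigset n (M : 'M[C]_n) : set R :=
  [set cabs l | l in [set l : C | eigenvalue M l]].

Lemma specradE n (M : 'M[C]_n) : specrad M = sup (eigset M).
Proof. by []. Qed.

Lemma eigset_ub n (M : 'M[C]_n) : has_ubound (eigset M).
Proof.
exists (n%:R * mn M) => _ [l hl <-].
by have := eig_bound 1 hl; rewrite !expr1.
Qed.

Lemma specrad_ub n (M : 'M[C]_n) mu : eigenvalue M mu -> cabs mu <= specrad M.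
Proof. by move=> h; apply: (ub_le_sup (eigset_ub M)); exists mu. Qed.

Lemma specrad_ge0 n (M : 'M[C]_n) : 0 <= specrad M.
Proof.
have [[l hl]|nol] := pselect (exists l, eigenvalue M l).
  exact: le_trans (cabs_ge0 l) (specrad_ub hl).
rewrite specradE; have -> : eigset M = set0.
  by apply/seteqP; split => // x [l hl _]; exfalso; apply: nol; exists l.
by rewrite sup0.
Qed.

Lemma eigenvalue_det n (M : 'M[C]_n) a : eigenvalue M a = (\det (M - a%:M) == 0).
Proof.
by rewrite /eigenvalue /eigenspace kermx_eq0 row_free_unit unitmxE unitfE negbK.
Qed.

End Eigen.

End Part3.
Import Part3.

Module Part4.


Import ComplexField.
Section Gelfand.
Variable R : realType.
Local Notation C := (R[i]).

Lemma cabsR (x : R) : 0 <= x -> cabs (x%:C%C : C) = x.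
Proof.
move=> x0; rewrite /cabs /= expr0n /= addr0 sqrtr_sqr ger0_norm //.
Qed.

Lemma trig_scale n (T : 'M[C]_n) rho beta :
  is_trig_mx T -> 0 <= rho -> rho < beta -> (forall i, cabs (T i i) <= rho) ->
  exists S S' : 'M[C]_n, [/\ S *m S' = 1%:M, S' *m S = 1%:M &
     ninf (S *m T *m S') <= beta].
Proof.
move=> /is_trig_mxP Ttrig rho0 rb hT.
set m := mn T.
have m0 : 0 <= m by exact: mn_ge0.
have den0 : 0 < n%:R * m + 1 by rewrite ltr_wpDl // mulr_ge0 ?ler0n.
set del := Num.min 1 ((beta - rho) / (n%:R * m + 1)).
have del0 : 0 < del by rewrite lt_min ltr01 divr_gt0 // subr_gt0.
have del1 : del <= 1 by rewrite ge_min lexx.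
have delm : n%:R * m * del <= beta - rho.
  apply: le_trans (_ : n%:R * m * ((beta - rho) / (n%:R * m + 1)) <= _).
    by apply: ler_wpM2l; [rewrite mulr_ge0 ?ler0n | rewrite ge_min lexx orbT].
  rewrite mulrA ler_pdivrMr // [_ * (beta - rho)]mulrC.
  rewrite ler_wpM2l ?subr_ge0 ?ltW //.
  by rewrite ltrDl ltr01.
have delU : del != 0 by rewrite gt_eqF.
exists (diag_mx (\row_(i < n) ((del ^+ i)%:C%C : C))), (diag_mx (\row_(i < n) ((del^-1 ^+ i)%:C%C : C))).
have dd : forall i : 'I_n, ((del ^+ i)%:C%C : C) * (del^-1 ^+ i)%:C%C = 1.
  by move=> i; rewrite -rmorphM /= -exprMn mulfV // expr1n.
split.
- apply/matrixP => i j; rewrite mul_diag_mx !mxE.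
  by case: eqP => [->|_]; rewrite ?mulr1n ?mulr0n ?mulr0 // dd.
- apply/matrixP => i j; rewrite mul_diag_mx !mxE.
  by case: eqP => [->|_]; rewrite ?mulr1n ?mulr0n ?mulr0 // mulrC dd.
apply: ninf_le; first by apply: le_trans (ltW rb).
move=> i.
apply: le_trans (_ : \sum_j ((j == i)%:R * rho + del * m) <= _).
  apply: ler_sum => j _; rewrite mul_mx_diag mul_diag_mx !mxE.
  rewrite !cabsM !cabsR ?exprn_ge0 ?invr_ge0 ?(ltW del0) //.
  have hdj : forall k, del ^+ k * del^-1 ^+ k = 1.
    by move=> k; rewrite -exprMn mulfV // expr1n.
  have [ji|ij|ij] := ltngtP j i.
  - rewrite (_ : (j == i) = false) ?mul0r ?add0r; last first.
      by apply/eqP => eji; move: ji; rewrite eji ltnn.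
    have -> : del ^+ i * cabs (T i j) * del^-1 ^+ j = del ^+ (i - j) * cabs (T i j).
      rewrite -{1}(subnK (ltnW ji)) exprD -[RHS]mulr1 -(hdj j); ring.
    apply: ler_pM; rewrite ?exprn_ge0 ?cabs_ge0 ?mn_entry //; first exact: ltW.
    case: (i - j)%N (subn_gt0 j i) => [|k]; first by rewrite ji.
    move=> _; rewrite exprS ler_piMr //; first exact: ltW.
    by apply: exprn_ile1 => //; exact: ltW.
  - rewrite Ttrig // cabs0 mulr0 mul0r; apply: addr_ge0.
      by apply: mulr_ge0; rewrite ?ler0n.
    by apply: mulr_ge0 => //; exact: ltW.
  - have -> : j = i by apply: val_inj.
    rewrite eqxx mul1r -mulrA [cabs _ * _]mulrC mulrA hdj mul1r.
    by apply: le_trans (hT i) _; rewrite lerDl mulr_ge0 // ltW.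
rewrite big_split /= sumr_const card_ord.
rewrite (bigD1 i) //= big1 ?addr0; last by move=> j /negbTE ->; rewrite mul0r.
rewrite eqxx mul1r -mulr_natl -lerBrDl; apply: le_trans delm.
by rewrite mulrA mulrAC.
Qed.

End Gelfand.

End Part4.
Import Part4.

Module Part5.


Section Gelfand2.
Variable R : realType.
Local Notation C := (R[i]).

Lemma conj_pow n (Q Q' U : 'M[C]_n) k : Q *m Q' = 1%:M -> Q' *m Q = 1%:M ->
  (Q' *m U *m Q) ^+ k = Q' *m U ^+ k *m Q.
Proof.
move=> h1 h2; elim: k => [|k IH]; first by rewrite !expr0 mulmx1 h2.
by rewrite exprS IH exprS -!mulmxE !mulmxA -(mulmxA _ Q Q') h1 mulmx1.
Qed.

Lemma trig_eig n (T : 'M[C]_n) i : is_trig_mx T -> eigenvalue T (T i i).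
Proof.
move=> /is_trig_mxP Tt; rewrite eigenvalue_det.
have tr : is_trig_mx (T - (T i i)%:M).
  apply/is_trig_mxP => a b ab; rewrite !mxE Tt //.
  by rewrite (_ : (a == b) = false) ?mulr0n ?subr0 //; apply/eqP => e; move: ab; rewrite e ltnn.
rewrite (det_trig tr) (bigD1 i) //= !mxE eqxx mulr1n subrr mul0r //.
Qed.

Lemma gelfand n (B : 'M[C]_n) beta : (0 < n)%N -> specrad B < beta ->
  exists K, 0 <= K /\ forall k, mn (B ^+ k) <= K * beta ^+ k.
Proof.
move=> n0 rb.
have [P Pu Pt] := Schur B n0.
have Pi : P \in unitmx by exact: unitarymx_unit.
move: Pt; rewrite /similar_to /conjmx pinvmxE //= => Pt.
set T := P *m B *m invmx P in Pt.
have hT : forall i, cabs (T i i) <= specrad B.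
  move=> i; apply: specrad_ub.
  have /eigenvalueP [v hv v0] := trig_eig i Pt.
  apply/eigenvalueP; exists (v *m P).
    by rewrite scalemxAl -hv /T !mulmxA mulmxKV.
  apply: contra v0 => /eqP vP; apply/eqP.
  by rewrite -(mulmxK Pi v) vP mul0mx.
have [S [S' [h1 h2 hU]]] := trig_scale Pt (specrad_ge0 B) rb hT.
set U := S *m T *m S' in hU.
set Q := S *m P; set Q' := invmx P *m S'.
have q1 : Q *m Q' = 1%:M.
  by rewrite /Q /Q' mulmxA -(mulmxA S) mulmxV // mulmx1 h1.
have q2 : Q' *m Q = 1%:M.
  by rewrite /Q /Q' mulmxA -(mulmxA _ S' S) h2 mulmx1 mulVmx.
have BE : B = Q' *m U *m Q.
  rewrite /Q /Q' /U /T !mulmxA -(mulmxA (invmx P) S' S) h2 mulmx1.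
  rewrite -(mulmxA _ S' S) h2 mulmx1 mulmxKV // mulVmx // mul1mx //.
have b0 : 0 <= beta by apply: le_trans (ltW rb); exact: specrad_ge0.
exists (n%:R * (n%:R * mn Q' * mn Q)); split.
  by rewrite !mulr_ge0 ?ler0n ?mn_ge0.
move=> k; rewrite BE conj_pow //.
apply: le_trans (mn_mul _ _) _.
apply: le_trans (_ : n%:R * (n%:R * (mn Q' * mn (U ^+ k)) * mn Q) <= _).
  apply: ler_wpM2l; first exact: ler0n.
  apply: ler_wpM2r; first exact: mn_ge0.
  exact: mn_mul.
have hUk : mn (U ^+ k) <= beta ^+ k.
  apply: le_trans (mn_ninf _) _; apply: le_trans (ninfX _ _) _.
  by apply: lerXn2r; rewrite ?nnegrE ?ninf_ge0.
rewrite -!mulrA; apply: ler_wpM2l; first exact: ler0n.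
apply: ler_wpM2l; first exact: ler0n.
apply: ler_wpM2l; first exact: mn_ge0.
by rewrite mulrC; apply: ler_wpM2l => //; exact: mn_ge0.
Qed.

End Gelfand2.

End Part5.
Import Part5.

Module Part6.

Import numFieldNormedType.Exports.
Local Open Scope classical_set_scope.

Section Analytic.
Variable R : realType.

Lemma ev_nat (P : nat -> Prop) : (exists N, forall n, (N <= n)%N -> P n) ->
  \forall n \near \oo, P n.
Proof. by move=> [N h]; exists N. Qed.

Lemma bernoulli (q : R) n : 1 <= q -> 1 + n%:R * (q - 1) <= q ^+ n.
Proof.
move=> q1; elim: n => [|n IH]; first by rewrite mul0r addr0 expr0.
rewrite exprS; apply: le_trans (_ : q * (1 + n%:R * (q - 1)) <= _); last first.
  by apply: ler_wpM2l => //; apply: le_trans q1.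
have h : 0 <= n%:R * ((q - 1) * (q - 1)) by rewrite mulr_ge0 ?ler0n ?mulr_ge0 ?subr_ge0.
rewrite -natr1; nra.
Qed.

Lemma pow_large (q M : R) : 1 < q -> exists N, forall n, (N <= n)%N -> M <= q ^+ n.
Proof.
move=> q1; have q0 : 0 < q - 1 by rewrite subr_gt0.
exists (Num.Def.archi_bound (`|M| / (q - 1))) => n hn.
have := archi_boundP (divr_ge0 (normr_ge0 M) (ltW q0)).
move=> hb; apply: le_trans (bernoulli n (ltW q1)).
apply: le_trans (ler_norm M) _; apply: le_trans (_ : n%:R * (q - 1) <= _); last by rewrite lerDr.
rewrite -ler_pdivrMr //; apply: le_trans (ltW hb) _.
by rewrite ler_nat.
Qed.

Lemma ev_upper (u : nat -> R) (l : R) : 0 <= l -> (forall n, 0 <= u n) ->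
  (forall beta, l < beta -> exists K, 0 <= K /\
      forall n, (0 < n)%N -> u n ^+ n <= K * beta ^+ n) ->
  forall e, 0 < e -> exists N, forall n, (N <= n)%N -> u n <= l + e.
Proof.
move=> l0 u0 hup e e0.
set beta := l + e / 2.
have e2 : 0 < e / 2 by rewrite divr_gt0.
have lb : l < beta by rewrite ltrDl.
have b0 : 0 < beta by apply: le_lt_trans lb.
have [K [K0 hK]] := hup beta lb.
have q1 : 1 < (l + e) / beta.
  by rewrite ltr_pdivlMr // mul1r ltrD2l ltr_pdivrMr // ltr_pMr // ltr1n.
have [N hN] := pow_large K q1.
exists N.+1 => n hn.
have n0 : (0 < n)%N by apply: leq_trans hn.
have le0 : 0 <= l + e by rewrite addr_ge0 // ltW.
rewrite -(ler_pXn2r n0) ?nnegrE ?u0 //; apply: le_trans (hK n n0) _.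
have := hN n (ltnW hn); rewrite expr_div_n ler_pdivlMr ?exprn_gt0 //.
Qed.

Lemma ev_lower (u : nat -> R) (a Cst : R) : 0 < Cst -> 0 <= a ->
  (forall n, 0 <= u n) ->
  (forall n, (0 < n)%N -> Cst * a ^+ n <= u n ^+ n) ->
  forall t, t < a -> exists N, forall n, (N <= n)%N -> t <= u n.
Proof.
move=> C0 a0 u0 hlow t ta.
have [t0|t0] := leP t 0.
  by exists 0%N => n _; apply: le_trans t0 (u0 n).
have q1 : 1 < a / t by rewrite ltr_pdivlMr // mul1r.
have [N hN] := pow_large (Cst^-1) q1.
exists N.+1 => n hn.
have n0 : (0 < n)%N by apply: leq_trans hn.
rewrite -(ler_pXn2r n0) ?nnegrE ?u0 ?(ltW t0) //; apply: le_trans (hlow n n0).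
have := hN n (ltnW hn); rewrite expr_div_n ler_pdivlMr ?exprn_gt0 //.
by rewrite ler_pdivrMl // mulrC.
Qed.

Lemma limn_eq (u : nat -> R) (l : R) :
  (forall e, 0 < e -> exists N, forall n, (N <= n)%N -> u n <= l + e) ->
  (forall t, t < l -> exists N, forall n, (N <= n)%N -> t <= u n) ->
  limn u = l.
Proof.
move=> hup hlo; apply: cvg_lim => //; apply/cvgrPdist_le => e e0.
apply: ev_nat.
have [N1 h1] := hup e e0.
have [N2 h2] : exists N, forall n, (N <= n)%N -> l - e <= u n.
  by apply: hlo; rewrite ltrBlDr ltrDl.
exists (maxn N1 N2) => n hn.
have := h1 n (leq_trans (leq_maxl _ _) hn).
have := h2 n (leq_trans (leq_maxr _ _) hn).
rewrite ler_distlC => ha hb; rewrite ha /=.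
by [].
Qed.

End Analytic.

End Part6.
Import Part6.

Module Part7.

Local Open Scope classical_set_scope.

Section RankOne.
Variable R : realType.
Local Notation C := (R[i]).
Variables (d : nat) (A B : 'M[C]_d) (u : 'cV[C]_d) (w : 'rV[C]_d).
Hypothesis hA : A = u *m w.

Definition cc k : C := (w *m B ^+ k *m u) 0 0.

Lemma scal1l m (X : 'M[C]_1) (r : 'M[C]_(1, m)) : X *m r = X 0 0 *: r.
Proof.
apply/matrixP => i j; rewrite !mxE big_ord1 (ord1 i); by [].
Qed.

Lemma scal1r m (X : 'M[C]_1) (v : 'M[C]_(m, 1)) : v *m X = X 0 0 *: v.
Proof.
apply/matrixP => i j; rewrite !mxE big_ord1 (ord1 j) mulrC; by [].
Qed.

Lemma ABu k : A *m B ^+ k *m u = cc k *: u.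
Proof. rewrite hA -!mulmxA scal1r /cc. congr (_ *: _). exact: (congr1 (fun (X : 'M[C]_1) => X 0 0) (mulmxA w (B ^+ k) u)). Qed.

Lemma ABA0 k : A *m B ^+ k *m A = cc k *: A.
Proof.
by rewrite [X in _ *m X]hA mulmxA ABu -scalemxAl -hA.
Qed.

Lemma ABA k (M : 'M[C]_d) : A *m B ^+ k *m (A *m M) = cc k *: (A *m M).
Proof. by rewrite mulmxA ABA0 -scalemxAl. Qed.

Lemma prods_Bpow k n P : prods A B n P -> prods A B (k + n) (B ^+ k *m P).
Proof.
move=> h; elim: k => [|k IH]; first by rewrite expr0 mul1mx.
by rewrite exprS -mulmxE -mulmxA addSn; apply: prodsB.
Qed.

Lemma prods_pow n : prods A B n (B ^+ n).
Proof. by have := prods_Bpow n (prods0 A B); rewrite mulmx1 addn0. Qed.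

Lemma prods_ABk k n P : prods A B n P -> prods A B (n + k.+1) (A *m B ^+ k *m P).
Proof.
move=> h; rewrite -mulmxA addnS addnC; apply: prodsA; exact: prods_Bpow.
Qed.

Lemma low_word k s q : prods A B (q * k.+1 + s).+1 (cc k ^+ q *: (A *m B ^+ s)).
Proof.
elim: q => [|q IH].
  by rewrite expr0 scale1r mul0n add0n; apply: prodsA; exact: prods_pow.
have := prods_ABk k IH.
rewrite -scalemxAr ABA scalerA -exprSr.
by rewrite (_ : ((q * k.+1 + s).+1 + k.+1)%N = (q.+1 * k.+1 + s).+1)%N //; lia.
Qed.

Lemma specrad_rank1 k : specrad (A *m B ^+ k) = cabs (cc k).
Proof.
set r := w *m B ^+ k.
have ME : A *m B ^+ k = u *m r by rewrite hA -mulmxA.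
have ccE : cc k = (r *m u) 0 0 by [].
have eig : forall mu, eigenvalue (A *m B ^+ k) mu -> mu = 0 \/ mu = cc k.
  move=> mu /eigenvalueP [v hv v0]; rewrite ME mulmxA scal1l in hv.
  set s := (v *m u) 0 0 in hv.
  have : s * cc k = mu * s.
    have := congr1 (fun X => (X *m u) 0 0) hv => /=.
    by rewrite /cc -/r /s -!scalemxAl !mxE.
  have [s0|s0] := eqVneq s 0.
    move: hv; rewrite s0 scale0r => /esym /eqP; rewrite scalemx_eq0 (negbTE v0) orbF.
    by move=> /eqP ->; left.
  by move=> /eqP; rewrite [mu * s]mulrC (inj_eq (mulfI s0)) => /eqP ->; right.
apply/eqP; rewrite eq_le; apply/andP; split.
  have [[mu hmu]|nomu] := pselect (exists mu, eigenvalue (A *m B ^+ k) mu).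
    rewrite specradE; apply: ge_sup; first by exists (cabs mu), mu.
    move=> _ [l hl <-]; have [->|->] := eig l hl; last by [].
    by rewrite cabs0 cabs_ge0.
  rewrite specradE; have -> : eigset (A *m B ^+ k) = set0.
    by apply/seteqP; split => // x [l hl _]; exfalso; apply: nomu; exists l.
  by rewrite sup0 cabs_ge0.
have [c0|c0] := eqVneq (cc k) 0; first by rewrite c0 cabs0 specrad_ge0.
apply: specrad_ub; apply/eigenvalueP; exists r.
  by rewrite ME mulmxA scal1l -ccE.
by apply: contra c0 => /eqP r0; rewrite ccE r0 mul0mx mxE.
Qed.

End RankOne.

End Part7.
Import Part7.

Module Part8.

Local Open Scope classical_set_scope.

Section WordBound.
Variable R : realType.
Local Notation C := (R[i]).
Variables (d : nat) (A B : 'M[C]_d) (u : 'cV[C]_d) (w : 'rV[C]_d).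
Hypothesis hA : A = u *m w.

Lemma word_bound beta K : 0 < beta -> 0 <= K ->
  (forall k, mn (B ^+ k) <= K * beta ^+ k) ->
  (forall k, cabs (cc B u w k) <= beta ^+ k.+1) ->
  exists K2, 0 <= K2 /\ forall n P, prods A B n P -> mn P <= K2 * beta ^+ n.
Proof.
move=> b0 K0 hB hc.
set K' := d%:R * mn w * K.
have K'0 : 0 <= K' by rewrite !mulr_ge0 ?ler0n ?mn_ge0.
have inv : forall n P, prods A B n P -> P = B ^+ n \/
   exists j m (r : 'rV[C]_d), [/\ n = (j + m).+1, P = B ^+ j *m u *m r &
      mn r <= K' * beta ^+ m].
  move=> n P; elim => {n P} [|n P _ IH|n P _ IH].
  - by left; rewrite expr0.
  - right; case: IH => [->|[j [m [r [-> -> hr]]]]].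
      exists 0%N, n, (w *m B ^+ n); split => //.
        by rewrite expr0 mul1mx hA mulmxA.
      apply: le_trans (mn_mul _ _) _; rewrite /K' -!mulrA.
      apply: ler_wpM2l; first exact: ler0n.
      by apply: ler_wpM2l; [exact: mn_ge0 | exact: hB].
    exists 0%N, (j + m).+1, (cc B u w j *: r); split => //.
      by rewrite expr0 mul1mx !mulmxA (ABu B hA) -scalemxAl -scalemxAr.
    apply: le_trans (mn_scale _ _) _.
    apply: le_trans (_ : beta ^+ j.+1 * (K' * beta ^+ m) <= _).
      by apply: ler_pM; rewrite ?cabs_ge0 ?mn_ge0.
    by rewrite mulrCA -exprD addSn.
  - case: IH => [->|[j [m [r [-> -> hr]]]]].
      by left; rewrite exprS mulmxE.
    right; exists j.+1, m, r; split => //.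
    by rewrite exprS -mulmxE !mulmxA.
set K2 := Num.max K ((d%:R * K * mn u) * K' / beta).
exists K2; split; first by rewrite le_max K0.
move=> n P /inv [->|[j [m [r [-> -> hr]]]]].
  apply: le_trans (hB n) _; apply: ler_wpM2r; first by apply: exprn_ge0; exact: ltW.
  by rewrite le_max lexx.
apply: le_trans (mn_mul _ _) _.
apply: le_trans (_ : 1%:R * ((d%:R * ((K * beta ^+ j) * mn u)) * (K' * beta ^+ m)) <= _).
  apply: ler_wpM2l; first exact: ler0n.
  apply: ler_pM; rewrite ?mn_ge0 //.
  apply: le_trans (mn_mul _ _) _; apply: ler_wpM2l; first exact: ler0n.
  by apply: ler_wpM2r; [exact: mn_ge0 | exact: hB].
apply: le_trans (_ : ((d%:R * K * mn u) * K' / beta) * beta ^+ (j + m).+1 <= _); last first.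
  apply: ler_wpM2r; first by apply: exprn_ge0; exact: ltW.
  by rewrite le_max lexx orbT.
rewrite exprS exprD; have bne : beta != 0 by rewrite gt_eqF.
rewrite le_eqVlt; apply/orP; left; apply/eqP; by field.
Qed.

End WordBound.

End Part8.
Import Part8.

Module Part9.

Import numFieldNormedType.Exports.
Local Open Scope classical_set_scope.

Section Helpers.
Variable R : realType.
Local Notation C := (R[i]).

Lemma rank1_fact d (A : 'M[C]_d) : \rank A = 1%N ->
  exists (u : 'cV[C]_d) (w : 'rV[C]_d), A = u *m w.
Proof.
move=> rk; have r0 : (0 < \rank A)%N by rewrite rk.
set j0 := Ordinal r0.
exists (\col_i col_base A i j0), (\row_j row_base A j0 j).
apply/matrixP => i j; rewrite -{1}(mulmx_base A) !mxE (bigD1 j0) //= big1 ?addr0.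
  by rewrite !mxE big_ord1 !mxE.
move=> l /eqP lj0; exfalso; apply: lj0; apply: val_inj => /=.
by have := ltn_ord l; move: (nat_of_ord l) => x; rewrite rk; case: x.
Qed.

Lemma fin_max (f : nat -> R) N : exists k, (k <= N)%N /\ forall j, (j <= N)%N -> f j <= f k.
Proof.
elim: N => [|N [k [kN hk]]].
  by exists 0%N; split => // j; rewrite leqn0 => /eqP ->.
have [le|lt] := leP (f N.+1) (f k).
  exists k; split; first by apply: leq_trans kN _.
  move=> j; rewrite leq_eqVlt => /orP [/eqP ->|]; first by [].
  by rewrite ltnS; exact: hk.
exists N.+1; split => // j; rewrite leq_eqVlt => /orP [/eqP ->|]; first by [].
by rewrite ltnS => /hk hj; apply: le_trans hj (ltW lt).
Qed.

Lemma fin_min_pos (g : nat -> R) k : (forall s, (s <= k)%N -> 0 < g s) ->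
  exists2 del, 0 < del & forall s, (s <= k)%N -> del <= g s.
Proof.
elim: k => [|k IH] h.
  by exists (g 0%N); [exact: h | move=> s; rewrite leqn0 => /eqP ->].
have [del del0 hd] := IH (fun s hs => h s (leqW hs)).
exists (Num.min del (g k.+1)); first by rewrite lt_min del0 h.
move=> s; rewrite leq_eqVlt => /orP [/eqP ->|]; first by rewrite ge_min lexx orbT.
by rewrite ltnS => /hd hs; rewrite ge_min hs.
Qed.

Lemma powR_invn_ge (x y : R) n : 0 <= x -> 0 <= y -> (0 < n)%N ->
  (y <= x `^ (n%:R^-1)) = (y ^+ n <= x).
Proof.
move=> x0 y0 n0; rewrite -{2}(powR_invnK x0 n0).
by rewrite ler_pXn2r // -?lt0n // nnegrE powR_ge0.
Qed.

End Helpers.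

End Part9.
Import Part9.

Module Part10.

Import numFieldNormedType.Exports.
Local Open Scope classical_set_scope.

Lemma jsr_main (R : realType) d (A B : 'M[R[i]]_d) (l : R) : \rank A = 1%N ->
  specrad B <= l ->
  (forall k, specrad (A *m B ^+ k) `^ (k.+1%:R^-1) <= l) ->
  (l = specrad B \/ exists k, l = specrad (A *m B ^+ k) `^ (k.+1%:R^-1) /\ specrad B < l) ->
  jsr2 A B = l.
Proof.
move=> rk hl hf hc.
have d0 : (0 < d)%N by have := rank_leq_row A; rewrite rk.
have [u [w hA]] := rank1_fact rk.
have sE := specrad_rank1 B hA.
have r0 := specrad_ge0 B.
have l0 : 0 <= l by apply: le_trans hl.
have ck : forall k, cabs (cc B u w k) <= l ^+ k.+1.
  move=> k; have := hf k; rewrite sE powR_invn_le ?cabs_ge0 //.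
apply: limn_eq.
  apply: ev_upper => //; first exact: jsr_seq_ge0.
  move=> beta lb.
  have b0 : 0 < beta by apply: le_lt_trans lb.
  have [K [K0 hK]] := gelfand d0 (le_lt_trans hl lb).
  have hc' : forall k, cabs (cc B u w k) <= beta ^+ k.+1.
    move=> k; apply: le_trans (ck k) _; apply: lerXn2r; rewrite ?nnegrE //.
      exact: ltW.
    exact: ltW.
  have [K2 [K20 hK2]] := word_bound hA b0 K0 hK hc'.
  exists K2; split => // n n0.
  have h0 : 0 <= K2 * beta ^+ n by rewrite mulr_ge0 // exprn_ge0 // ltW.
  have := jsr_le h0 (fun P hP => hK2 n P hP).
  by rewrite powR_invn_ge // jsr_seq_ge0.
case: hc => [lE|[k [lE rl]]].
  move=> t tl.
  have [[mu [hmu tmu]] | nomu] := pselect (exists mu, eigenvalue B mu /\ t < cabs mu).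
    apply: (@ev_lower _ _ (cabs mu) (d%:R^-1)) => //.
    - by rewrite invr_gt0 ltr0n.
    - exact: cabs_ge0.
    - exact: jsr_seq_ge0.
    move=> n n0.
    have h1 := eig_bound n hmu.
    have h2 : mn (B ^+ n) <= jsr_seq A B n ^+ n.
      have := jsr_ge (prods_pow A B n).
      by rewrite powR_invn_le ?mn_ge0 ?jsr_seq_ge0.
    rewrite mulrC ler_pdivrMr ?ltr0n //; apply: le_trans h1 _.
    by rewrite mulrC ler_wpM2r ?ler0n.
  have [ne|emp] := pselect (eigset B !=set0).
    exfalso; have := @sup_gt _ (eigset B) t ne; rewrite -specradE -lE.
    move=> /(_ tl) [_ [mu hmu <-] tm]; apply: nomu; exists mu; split => //.
  have eE : eigset B = set0.
    by apply/seteqP; split => // x hx; exfalso; apply: emp; exists x.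
  have t0 : t < 0 by move: tl; rewrite lE specradE eE sup0.
  by exists 0%N => n _; apply: le_trans (ltW t0) (jsr_seq_ge0 A B n).
set c := cc B u w k.
have fk : l = cabs c `^ (k.+1%:R^-1) by rewrite lE sE.
have c0 : c != 0.
  apply/eqP => c0; move: rl; rewrite fk c0 cabs0 powR0 ?invr_eq0 ?pnatr_eq0 //.
  by rewrite ltNge r0.
have cabsc : cabs c = l ^+ k.+1 by rewrite fk powR_invnK ?cabs_ge0.
have nz : forall s, (s <= k)%N -> 0 < mn (A *m B ^+ s).
  move=> s sk; apply: mn_pos; apply/eqP => hs.
  have hk : A *m B ^+ k = 0.
    by rewrite -(subnKC sk) exprD -mulmxE mulmxA hs mul0mx.
  have := ABu B hA k; rewrite hk mul0mx => /esym /eqP.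
  rewrite scalemx_eq0 (negbTE c0) /= => /eqP u0.
  by move: rk; rewrite hA u0 mul0mx mxrank0.
have [del del0 hdel] := fin_min_pos nz.
set Lam := Num.max 1 l ^+ k.+1.
have Lam1 : 1 <= Lam by rewrite exprn_ege1 // le_max lexx.
have Lam0 : 0 < Lam by apply: lt_le_trans Lam1.
apply: (@ev_lower _ _ l (del / Lam)) => //.
- by rewrite divr_gt0.
- exact: jsr_seq_ge0.
move=> n n0.
set q := (n.-1 %/ k.+1)%N; set s := (n.-1 %% k.+1)%N.
have nE : n = (q * k.+1 + s).+1 by rewrite /q /s -divn_eq prednK.
have hs : (s <= k)%N by rewrite /s -ltnS ltn_mod.
have hP := low_word B hA k s q; rewrite -nE in hP.
have h1 := jsr_ge hP; rewrite powR_invn_le ?mn_ge0 ?jsr_seq_ge0 // in h1.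
apply: le_trans h1; rewrite mn_scaleE cabsX cabsc -exprM.
have hls : l ^+ s.+1 <= Lam.
  apply: le_trans (_ : Num.max 1 l ^+ s.+1 <= _).
    by apply: lerXn2r; rewrite ?nnegrE ?le_max ?lexx ?orbT ?ler01.
  by apply: ler_weXn2l; rewrite ?le_max ?lexx.
rewrite nE (_ : ((q * k.+1 + s).+1 = k.+1 * q + s.+1)%N); last by lia.
rewrite exprD.
apply: le_trans (_ : l ^+ (k.+1 * q) * del <= _); last first.
  apply: ler_wpM2l; first by rewrite exprn_ge0.
  exact: hdel.
have key : del / Lam * l ^+ s.+1 <= del.
  by rewrite mulrAC ler_pdivrMr // ler_wpM2l // ltW.
rewrite mulrCA; apply: ler_wpM2l => //; exact: exprn_ge0.
Qed.

End Part10.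
Import Part10.


Import numFieldNormedType.Exports.

Lemma find_lambda (R : realType) d (A B : 'M[R[i]]_d) : \rank A = 1%N ->
  exists l : R, [/\ specrad B <= l,
  (forall k, specrad (A *m B ^+ k) `^ (k.+1%:R^-1) <= l) &
  (l = specrad B \/ exists k, l = specrad (A *m B ^+ k) `^ (k.+1%:R^-1) /\ specrad B < l)].
Proof.
move=> rk.
set f := fun k => specrad (A *m B ^+ k) `^ (k.+1%:R^-1).
have [[k0 hk0]|nok] := pselect (exists k, specrad B < f k); last first.
  exists (specrad B); split => //; last by left.
  by move=> k; rewrite leNgt; apply/negP => h; apply: nok; exists k.
have d0 : (0 < d)%N by have := rank_leq_row A; rewrite rk.
have [u [w hA]] := rank1_fact rk.
have sE := specrad_rank1 B hA.
have r0 := specrad_ge0 B.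
set a0 := f k0 in hk0.
have a0p : 0 < a0 by apply: le_lt_trans hk0.
set beta := (specrad B + a0) / 2.
have rb : specrad B < beta by rewrite /beta ltr_pdivlMr // mulrDr mulr1 ltrD2l.
have ba : beta < a0 by rewrite /beta ltr_pdivrMr // mulrDr mulr1 ltrD2r.
have b0 : 0 < beta by apply: le_lt_trans rb.
have [K [K0 hK]] := gelfand d0 rb.
set K3 := d%:R * (d%:R * (mn w * K)) * mn u.
have hc : forall k, cabs (cc B u w k) <= K3 * beta ^+ k.
  move=> k; apply: le_trans (mn_entry _ 0 0) _.
  apply: le_trans (mn_mul _ _) _.
  rewrite /K3 -!mulrA; apply: ler_wpM2l; first exact: ler0n.
  rewrite [mn u * _]mulrC !mulrA; apply: ler_wpM2r; first exact: mn_ge0.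
  apply: le_trans (mn_mul _ _) _; rewrite -!mulrA; apply: ler_wpM2l; first exact: ler0n.
  by apply: ler_wpM2l; [exact: mn_ge0 | exact: hK].
have q1 : 1 < a0 / beta by rewrite ltr_pdivlMr // mul1r.
have [N hN] := pow_large (K3 / a0) q1.
have large : forall k, (N <= k)%N -> f k <= a0.
  move=> k kN; rewrite /f sE powR_invn_le ?cabs_ge0 ?(ltW a0p) //.
  apply: le_trans (hc k) _.
  have := hN k kN; rewrite expr_div_n ler_pdivlMr ?exprn_gt0 // mulrAC ler_pdivrMr //.
  by rewrite exprSr.
have [ks [ksN hks]] := fin_max f (maxn N k0).
exists (f ks); split.
- by apply: le_trans (ltW hk0) (hks _ (leq_maxr _ _)).
- move=> k; have [kl|kg] := leqP k (maxn N k0); first exact: hks.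
  apply: le_trans (large k _) _; first by apply: leq_trans (ltnW kg); exact: leq_maxl.
  exact: hks _ (leq_maxr _ _).
- right; exists ks; split; first by [].
  exact: lt_le_trans hk0 (hks _ (leq_maxr _ _)).
Qed.

Unset Implicit Arguments.

Theorem corollary4 (R : realType) (d : nat) (A B : 'M[R[i]]_d) :
  \rank A = 1%N ->
  jsr2 A B = specrad B \/
  exists n : nat, jsr2 A B = specrad (A *m B ^+ n) `^ (n.+1%:R^-1).
Proof.
move=> rk; have [l [h1 h2 h3]] := find_lambda B rk.
have E := jsr_main rk h1 h2 h3.
case: h3 => [lE|[k [lE _]]]; first by left; rewrite E.
by right; exists k; rewrite E.
Qed.
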